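(* Let $V$ be a finite set and $\mu\colon\binom V2\to\mathbb{Z}_+$. If there is a vertex $v\in V$ such that $\mu(e)=1$ for every edge $e\in\binom V2$ containing $v$, then $(\Delta_V)_\mu$ is contractible.
   Context: $(\Delta_V)_\mu$ is the edge inflation of the full simplex on $V$: the poset of pairs $(I,c_I)$ with $\varnothing\neq I\subseteq V$ and $c_I\colon\binom I2\to\mathbb{Z}_+$, $c_I(e)\in\{1,\dots,\mu(e)\}$, ordered by $(I,c_I)<(J,c_J)$ iff $I\subsetneq J$ and $c_I=c_J|_{\binom I2}$; topology refers to the realization of its order complex. *)

(* Defs.v *)
From HB Require Import structures.
From mathcomp Require Import all_boot all_order all_algebra.
From mathcomp Require Import all_classical all_reals topology function_spaces normedtype.
Set Implicit Arguments. Unset Strict Implicit. Unset Printing Implicit Defensive.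
Import Order.TTheory GRing.Theory Num.Theory.
Import numFieldNormedType.Exports.
Local Open Scope classical_set_scope.
Local Open Scope ring_scope.

(* Edges of V are the 2-element subsets e : {set V}, #|e| = 2.
   mu is a function {set V} -> nat of which only the values on 2-subsets matter. *)

(* a uniform bound for the labels: every value c(e) <= mu e fits in 'I_(Nmu mu) *)
Definition Nmu (V : finType) (mu : {set V} -> nat) : nat :=
  (\max_(e : {set V}) mu e).+1.

Definition infl_carrier (V : finType) (mu : {set V} -> nat) : finType :=
  ({set V} * {ffun {set V} -> 'I_(Nmu mu)})%type.

(* (I, c) is an element of (Delta_V)_mu: I nonempty, c(e) in {1..mu e} for every
   edge e of I, and c is normalized to 0 off the edges of I (so that the pair
   (I, c) encodes exactly the pair (I, c_I) of the paper). *)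
Definition is_infl (V : finType) (mu : {set V} -> nat)
    (x : infl_carrier mu) : bool :=
  (x.1 != finset.set0) &&
  [forall e : {set V},
     if (e \subset x.1) && (#|e| == 2)%N
     then ((0 < x.2 e) && (x.2 e <= mu e))%N
     else (x.2 e == 0 :> nat)].

Definition infl_lt (V : finType) (mu : {set V} -> nat)
    (x y : infl_carrier mu) : bool :=
  (x.1 \proper y.1) &&
  [forall e : {set V}, ((e \subset x.1) && (#|e| == 2)%N) ==> (x.2 e == y.2 e)].

(* For a finite poset given by the elements P of a finite type T and strict order
   lt, the realization of its order complex is the set of points f of R^T
   (product = Euclidean topology) with f >= 0, sum f = 1, whose support consists
   of elements of P and is a chain. *)
Definition order_complex_realization (R : realType) (T : finType)
    (P : pred T) (lt : rel T) : set {ptws T -> R} :=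
  [set f : {ptws T -> R} |
     (forall x, 0 <= f x) /\ (\sum_(x : T) f x = 1) /\
     (forall x, f x != 0 -> P x) /\
     (forall x y, f x != 0 -> f y != 0 -> x = y \/ lt x y \/ lt y x)].

Definition contractible (R : realType) (X : topologicalType) (A : set X) : Prop :=
  exists2 x0 : X, A x0 &
  exists H : R * X -> X,
    [/\ {within [set p : R * X | 0 <= p.1 <= 1 /\ A p.2], continuous H},
        (forall x, A x -> H (0, x) = x),
        (forall x, A x -> H (1, x) = x0) &
        (forall t x, 0 <= t <= 1 -> A x -> A (H (t, x)))].

(* Main.v *)
Require Import Defs.
From HB Require Import structures.
From mathcomp Require Import all_boot all_order all_algebra.
From mathcomp Require Import all_classical all_reals topology function_spaces normedtype.
From mathcomp Require Import lra.
Import Order.TTheory GRing.Theory Num.Theory.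
Import numFieldNormedType.Exports.
Local Open Scope classical_set_scope.
Local Open Scope ring_scope.

Section Cl.
Local Set Implicit Arguments. Local Unset Strict Implicit.
Variable R : realType.
Definition clamp (s : R) : R := Num.min 1 (Num.max 0 s).
Lemma clamp_ge0 s : 0 <= clamp s.
Proof. rewrite /clamp; case: (lerP 0 s) => h1; case: (lerP 1 _) => h2; lra. Qed.
Lemma clamp_le1 s : clamp s <= 1.
Proof. rewrite /clamp; case: (lerP 0 s) => h1; case: (lerP 1 _) => h2; lra. Qed.
Lemma clamp_pos s : clamp s != 0 -> 0 < s.
Proof. rewrite /clamp; case: (lerP 0 s) => h1; case: (lerP 1 _) => h2 /eqP h; lra. Qed.
Lemma clamp_one s : 1 <= s -> clamp s = 1.
Proof. rewrite /clamp; case: (lerP 0 s) => h1; case: (lerP 1 _) => h2 h; lra. Qed.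
Lemma clamp_zero s : s <= 0 -> clamp s = 0.
Proof. rewrite /clamp; case: (lerP 0 s) => h1; case: (lerP 1 _) => h2 h; lra. Qed.
End Cl.

Section Cts.
Variables (R : realType) (T : finType).
Local Notation X := {ptws T -> R}.


Lemma cts_coord x : continuous (fun z : R * X => z.2 x).
Proof.
move=> z.
have h1 := @proj_continuous T (fun _ => R) x (z.2).
have h2 : (snd @ z --> z.2) by exact: cvg_snd.
exact: (cvg_comp _ _ h2 h1).
Qed.
Lemma cts_fst : continuous (fun z : R * X => z.1).
Proof. move=> z; exact: cvg_fst. Qed.

Lemma cts_cst (c : R) : continuous (fun _ : R * X => c).
Proof. exact: (@cst_continuous (R * X)%type R c). Qed.

Lemma cts_add (f g : R * X -> R) : continuous f -> continuous g -> continuous (fun z => f z + g z).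
Proof. move=> cf cg z; exact: (@continuousD R R^o (R * X)%type f g z (cf z) (cg z)). Qed.

Lemma cts_mul (f g : R * X -> R) : continuous f -> continuous g -> continuous (fun z => f z * g z).
Proof. move=> cf cg z; exact: (@continuousM R (R * X)%type f g z (cf z) (cg z)). Qed.

Lemma cts_sum (F : T -> R * X -> R) : (forall x, continuous (F x)) ->
  continuous (fun z => \sum_(x : T) F x z).
Proof.
move=> cF.
elim: (index_enum T) => [|a s IH].
    have -> : (fun z : R * X => \sum_(x <- [::]) F x z) = (fun=> 0).
    by apply: funext => z; rewrite big_nil.
  exact: cts_cst.
have -> : (fun z : R * X => \sum_(x <- a :: s) F x z) = (fun z => F a z + \sum_(x <- s) F x z).
  by apply: funext => z; rewrite big_cons.
exact: cts_add.
Qed.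

Lemma cts_clamp (f : R * X -> R) : continuous f ->
  continuous (fun z => clamp (f z)).
Proof.
move=> cf z; rewrite /clamp.
apply: (@continuous_min R _ (fun _ => 1) (fun z => Num.max 0 (f z))).
  exact: cts_cst.
apply: (@continuous_max R _ (fun _ => 0) f); [exact: cts_cst| exact: cf].
Qed.

Lemma cts_ptws (H : R * X -> X) : (forall y, continuous (fun z => H z y)) -> continuous H.
Proof.
move=> cH z U [] P [] [] Q QfinP <- [] W JW Wpz.
move/(@preimage_subset _ _ H)/filterS; apply.
apply: (@filterS _ _ _ (H @^-1` W)); first by exists W.
have [L Lsub /[dup] WL <-] := QfinP _ JW; rewrite preimage_bigcap.
apply: filter_bigI => /= M /[dup] LM /Lsub /set_mem [] w _ [+] + /[dup] + <-.
move=> N oN NM.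
apply: (cH w z); apply: open_nbhs_nbhs; split => //.
by move: Wpz; rewrite -WL => /(_ _ LM); rewrite -NM.
Qed.
Lemma cts_opp (f : R * X -> R) : continuous f -> continuous (fun z => - f z).
Proof. move=> cf z; exact: (@continuousN R R^o (R * X)%type f z (cf z)). Qed.
End Cts.

Section Comb.
Local Set Implicit Arguments. Local Unset Strict Implicit.
Variables (V : finType) (mu : {set V} -> nat) (v : V).
Hypothesis hv1 : forall e : {set V}, #|e| = 2%N -> v \in e -> mu e = 1%N.
Local Notation T := (infl_carrier mu).
Local Notation P := (@is_infl V mu).
Local Notation lt := (@infl_lt V mu).
Definition le_i (x y : T) := x = y \/ lt x y.

Definition one_i : 'I_(Nmu mu) := @inord (\max_(e : {set V}) mu e) 1.

Lemma one_val (e : {set V}) : #|e| = 2%N -> v \in e -> nat_of_ord one_i = 1%N.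
Proof.
move=> ce ve; rewrite /one_i inordK //.
by rewrite ltnS -(hv1 ce ve); apply: leq_bigmax.
Qed.

Definition fx (x : T) : T :=
  (v |: x.1, [ffun e : {set V} => if (v \in e) && (e \subset v |: x.1) && (#|e| == 2)%N then one_i else x.2 e]).
Definition g (x : T) : T := if v \in x.1 then x else fx x.
Definition x0 : T := ([set v]%SET, [ffun _ : {set V} => ord0]).

Lemma infl_edge (x : T) (e : {set V}) : P x -> e \subset x.1 -> #|e| = 2%N -> (0 < x.2 e <= mu e)%N.
Proof.
by move=> /andP [_ /forallP /(_ e)] + se ce; rewrite se ce eqxx.
Qed.

Lemma infl_off (x : T) (e : {set V}) : P x -> ~~ ((e \subset x.1) && (#|e| == 2)%N) -> nat_of_ord (x.2 e) = 0%N.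
Proof.
by move=> /andP [_ /forallP /(_ e)] + /negbTE h; rewrite h => /eqP.
Qed.

Lemma infl_ne (x : T) : P x -> x.1 != finset.set0.
Proof. by case/andP. Qed.

Lemma subU1 (e A : {set V}) : v \notin e -> (e \subset v |: A) = (e \subset A).
Proof.
move=> ve; apply/idP/idP => /fintype.subsetP h; apply/fintype.subsetP => y ye.
  have := h y ye; rewrite in_setU1 => /orP [/eqP eyv|//].
  by move: ve; rewrite -eyv ye.
by rewrite in_setU1 h ?orbT.
Qed.

Lemma eq_infl (a b : T) : P a -> P b -> a.1 = b.1 ->
  (forall e : {set V}, e \subset a.1 -> #|e| = 2%N -> a.2 e = b.2 e) -> a = b.
Proof.
case: a => a1 a2; case: b => b1 b2 /= Pa Pb e1 h; subst b1; congr pair.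
apply/ffunP => e.
case: (boolP ((e \subset a1) && (#|e| == 2)%N)) => [/andP [se /eqP ce]|ne].
  exact: h.
apply: val_inj => /=.
by rewrite (@infl_off (a1, a2) e Pa ne) (@infl_off (a1, b2) e Pb ne).
Qed.

Lemma P_fx (x : T) : P x -> P (fx x).
Proof.
move=> Px; apply/andP; split.
  by apply/set0Pn; exists v; rewrite /= setU11.
apply/forallP => e /=; rewrite ffunE.
case: (boolP (v \in e)) => ve /=.
  case: ifP => [/andP [se /eqP ce]|hn].
    by rewrite se ce eqxx /= (one_val ce ve) (hv1 ce ve).
  rewrite hn (@infl_off x e Px) //; apply: contraFN hn => /andP [se2 ce2].
  by apply/andP; split; [apply: fintype.subset_trans se2 (finset.subsetUr _ _) | exact: ce2].
rewrite (@subU1 e x.1 ve).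
by move: Px => /andP [_ /forallP /(_ e)].
Qed.

Lemma lt_trans_i (a b c : T) : lt a b -> lt b c -> lt a c.
Proof.
move=> /andP [pab /forallP hab] /andP [pbc /forallP hbc]; apply/andP; split.
  exact: proper_trans pab pbc.
apply/forallP => e; apply/implyP => /andP [se ce].
have se' : e \subset b.1 by apply: fintype.subset_trans se (proper_sub pab).
move: (hab e) (hbc e); rewrite se ce se' /= => /eqP -> /eqP ->. done.
Qed.

Lemma le_lt_trans_i (a b c : T) : le_i a b -> lt b c -> lt a c.
Proof. by case=> [->//|]; apply: lt_trans_i. Qed.

Lemma lt_le_trans_i (a b c : T) : lt a b -> le_i b c -> lt a c.
Proof. by move=> h [<-//|]; apply: lt_trans_i. Qed.

Lemma le_trans_i (a b c : T) : le_i a b -> le_i b c -> le_i a c.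
Proof.
case=> [->//|hab] hbc; right; exact: lt_le_trans_i hab hbc.
Qed.

Lemma P_g (x : T) : P x -> P (g x).
Proof. by rewrite /g; case: ifP => // _; apply: P_fx. Qed.

Lemma v_g (x : T) : v \in (g x).1.
Proof. by rewrite /g; case: ifP => // _; rewrite /= setU11. Qed.

Lemma le_g (x : T) : P x -> le_i x (g x).
Proof.
move=> Px; rewrite /g; case: ifP => vx; first by left.
right; apply/andP; split.
  rewrite /= properE finset.subsetUr /=; apply/fintype.subsetPn; exists v; first by rewrite setU11.
  by rewrite vx.
apply/forallP => e; apply/implyP => /andP [se ce] /=; rewrite ffunE.
have ve : v \notin e by apply/negP => /(fintype.subsetP se); rewrite vx.
by rewrite (negbTE ve).
Qed.

Lemma g_below (x y : T) : P x -> P y -> v \in y.1 -> le_i x y -> le_i (g x) y.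
Proof.
move=> Px Py vy; rewrite /g; case: ifP => vx; first by [].
case=> [exy|]; first by move: vx; rewrite exy vy.
move=> /andP [pxy /forallP hxy].
have sub : v |: x.1 \subset y.1 by rewrite finset.subUset finset.sub1set vy (proper_sub pxy).
have agree : forall e : {set V}, e \subset (fx x).1 -> #|e| = 2%N -> (fx x).2 e = y.2 e.
  move=> e /= se ce; rewrite ffunE se ce eqxx andbT.
  case: (boolP (v \in e)) => ve /=.
    apply: val_inj => /=; rewrite (one_val ce ve).
    have := @infl_edge y e Py (fintype.subset_trans se sub) ce; rewrite (hv1 ce ve).
    by case: (nat_of_ord (y.2 e)) => [|[|n]].
  rewrite (@subU1 e x.1 ve) in se.
  by move: (hxy e); rewrite se ce eqxx /= => /eqP.
case: (eqVneq (v |: x.1) y.1) => [eq1|ne1].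
  by left; apply: eq_infl => //; apply: P_fx.
right; apply/andP; split; first by rewrite finset.properEneq ne1 sub.
apply/forallP => e; apply/implyP => /andP [se /eqP ce]; apply/eqP; exact: agree.
Qed.

Lemma g_mono (x y : T) : P x -> P y -> lt x y -> le_i (g x) (g y).
Proof.
move=> Px Py lxy; apply: g_below => //; [exact: P_g | exact: v_g |].
right; exact: (lt_le_trans_i lxy (le_g Py)).
Qed.

Lemma P_x0 : P x0.
Proof.
apply/andP; split; first by apply/set0Pn; exists v; rewrite set11.
apply/forallP => e /=; rewrite ffunE; case: ifP => // /andP [se /eqP ce].
by have := subset_leq_card se; rewrite cards1 ce.
Qed.

Lemma x0_below (y : T) : P y -> v \in y.1 -> le_i x0 y.
Proof.
move=> Py vy.
have agree : forall e : {set V}, e \subset x0.1 -> #|e| = 2%N -> x0.2 e = y.2 e.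
  by move=> e se ce; have := subset_leq_card se; rewrite cards1 ce.
case: (eqVneq [set v]%SET y.1) => [eq1|ne1].
  by left; apply: eq_infl => //; exact: P_x0.
right; apply/andP; split; first by rewrite finset.properEneq ne1 finset.sub1set vy.
apply/forallP => e; apply/implyP => /andP [se /eqP ce]; apply/eqP; exact: agree.
Qed.

End Comb.

Section Main.
Local Set Implicit Arguments. Local Unset Strict Implicit.
Variables (R : realType) (V : finType) (mu : {set V} -> nat) (v : V).
Hypothesis hv1 : forall e : {set V}, #|e| = 2%N -> v \in e -> mu e = 1%N.
Local Notation T := (infl_carrier mu).
Local Notation P := (@is_infl V mu).
Local Notation lt := (@infl_lt V mu).
Local Notation X := {ptws T -> R}.
Local Notation A := (@order_complex_realization R T P lt).
Local Notation g := (@g V mu v).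
Local Notation x0 := (@x0 V mu v).

Definition NV : nat := #|V|.
Definition phi (x : T) (t : R) : R := clamp ((NV.+1)%:R * t + (#|x.1|%:R - NV%:R)).
Definition psi (t : R) : R := clamp ((NV.+1)%:R * t + (- NV%:R)).

Definition Hf (z : R * X) : X := fun y : T =>
  (1 - psi z.1) * \sum_(x : T) z.2 x * ((1 - phi x z.1) * (x == y)%:R + phi x z.1 * (g x == y)%:R)
  + psi z.1 * (x0 == y)%:R.

Definition pt0 : X := fun y : T => (x0 == y)%:R.

Lemma psi0 : psi 0 = 0.
Proof. by rewrite /psi clamp_zero // mulr0 add0r oppr_le0 ler0n. Qed.

Lemma psi1 : psi 1 = 1.
Proof. by rewrite /psi clamp_one // mulr1 -natrB // subSnn. Qed.

Lemma phi0 (x : T) : phi x 0 = 0.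
Proof.
rewrite /phi clamp_zero // mulr0 add0r subr_le0 ler_nat; exact: max_card.
Qed.

Lemma phi_psi (x : T) (t : R) : psi t != 0 -> (0 < #|x.1|)%N -> phi x t = 1.
Proof.
move=> /clamp_pos h1 h2; rewrite /phi clamp_one //.
have : 1 <= (#|x.1|%:R : R) by rewrite ler1n.
lra.
Qed.

Lemma phi_lt (x x' : T) (t : R) : (#|x'.1| < #|x.1|)%N -> phi x' t != 0 -> phi x t = 1.
Proof.
move=> hc /clamp_pos h1; rewrite /phi clamp_one //.
have : (#|x'.1|%:R + 1 : R) <= #|x.1|%:R by rewrite natr1 ler_nat.
lra.
Qed.

Lemma phi_ge0 (x : T) (t : R) : 0 <= phi x t. Proof. exact: clamp_ge0. Qed.
Lemma phi_le1 (x : T) (t : R) : phi x t <= 1. Proof. exact: clamp_le1. Qed.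
Lemma psi_ge0 (t : R) : 0 <= psi t. Proof. exact: clamp_ge0. Qed.
Lemma psi_le1 (t : R) : psi t <= 1. Proof. exact: clamp_le1. Qed.

Lemma sum_delta (a : T) : \sum_(y : T) ((a == y)%:R : R) = 1.
Proof.
rewrite (bigD1 a) //= eqxx big1 ?addr0 // => y; rewrite eq_sym => /negbTE ->.
by [].
Qed.

Lemma sum_delta_l (F : T -> R) (y : T) : \sum_(x : T) F x * (x == y)%:R = F y.
Proof.
rewrite (bigD1 y) //= eqxx mulr1 big1 ?addr0 // => x /negbTE ->; by rewrite mulr0.
Qed.

Lemma Hf0 (p : X) : Hf (0, p) = p.
Proof.
apply: funext => y; rewrite /Hf /= psi0 subr0 mul1r mul0r addr0.
under eq_bigr do rewrite phi0 subr0 mul1r mul0r addr0.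
exact: sum_delta_l.
Qed.

Lemma Hf1 (p : X) : Hf (1, p) = pt0.
Proof. by apply: funext => y; rewrite /Hf /= psi1 subrr mul0r add0r mul1r. Qed.

Lemma Hf_ge0 (t : R) (p : X) : 0 <= t <= 1 -> (forall x, 0 <= p x) -> forall y, 0 <= Hf (t, p) y.
Proof.
move=> _ p0 y; rewrite /Hf /=.
apply: addr_ge0; last by apply: mulr_ge0; [exact: psi_ge0|exact: ler0n].
apply: mulr_ge0; first by rewrite subr_ge0 psi_le1.
apply: sumr_ge0 => x _; apply: mulr_ge0 => //.
apply: addr_ge0; apply: mulr_ge0; rewrite ?ler0n ?phi_ge0 ?subr_ge0 ?phi_le1 //.
Qed.

Lemma Hf_sum (t : R) (p : X) : \sum_(x : T) p x = 1 -> \sum_(y : T) Hf (t, p) y = 1.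
Proof.
move=> ps; rewrite /Hf /= big_split /= -!mulr_sumr sum_delta mulr1.
rewrite exchange_big /=.
under eq_bigr => x _.
  rewrite -mulr_sumr big_split /= -!mulr_sumr !sum_delta !mulr1 subrK mulr1.
over.
by rewrite ps mulr1 subrK.
Qed.

Definition kind (t : R) (p : X) (y : T) : Prop :=
  (psi t != 0 /\ y = x0) \/
  (psi t != 1 /\ exists x, p x != 0 /\ ((phi x t != 1 /\ y = x) \/ (phi x t != 0 /\ y = g x))).

Lemma Hf_kind (t : R) (p : X) (y : T) : Hf (t, p) y != 0 -> kind t p y.
Proof.
rewrite /Hf /= => hne.
case: (eqVneq (psi t * (x0 == y)%:R) 0) => h2.
  move: hne; rewrite h2 addr0 mulf_eq0 negb_or => /andP [h1 hs].
  right; split; first by apply: contra h1 => /eqP ->; rewrite subrr.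
  have /existsP [x hx] : [exists x : T, p x * ((1 - phi x t) * (x == y)%:R + phi x t * (g x == y)%:R) != 0].
    apply: contraR hs => /existsPn h; apply/eqP; apply: big1 => x _; apply/eqP.
    by move: (h x); rewrite negbK.
  exists x; move: hx; rewrite mulf_eq0 negb_or => /andP [px hx]; split => //.
  case: (eqVneq ((1 - phi x t) * (x == y)%:R) 0) => h5.
    right; move: hx; rewrite h5 add0r mulf_eq0 negb_or => /andP [h3 h4]; split => //.
    by case: (eqVneq (g x) y) h4 => [->//|_]; rewrite /= mulr0n eqxx.
  left; move: h5; rewrite mulf_eq0 negb_or => /andP [h3 h4]; split.
    by apply: contra h3 => /eqP ->; rewrite subrr.
  by case: (eqVneq x y) h4 => [->//|_]; rewrite /= mulr0n eqxx.
left; move: h2; rewrite mulf_eq0 negb_or => /andP [h3 h4]; split => //.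
by case: (eqVneq x0 y) h4 => [->//|_]; rewrite /= mulr0n eqxx.
Qed.

Definition comp (a b : T) := a = b \/ lt a b \/ lt b a.

Lemma comp_sym (a b : T) : comp a b -> comp b a.
Proof. by case=> [->|[h|h]]; [left|right;right|right;left]. Qed.

Lemma comp_le (a b : T) : le_i a b -> comp a b.
Proof. by case=> [->|h]; [left|right;left]. Qed.

Section Chain.
Variables (t : R) (p : X).
Hypothesis psupp : forall x : T, p x != 0 -> P x.
Hypothesis pchain : forall x y : T, p x != 0 -> p y != 0 -> comp x y.

Lemma comp_mixed (x x' : T) : p x != 0 -> p x' != 0 -> phi x t != 1 -> phi x' t != 0 -> comp x (g x').
Proof.
move=> px px' h1 h0.
have Px := psupp px; have Px' := psupp px'.
case: (pchain px px') => [<-|[lxx'|lx'x]].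
- exact: comp_le (le_g _ Px).
- by apply: comp_le; right; exact: (lt_le_trans_i lxx' (le_g _ Px')).
- move: lx'x => /andP [pr _]; have := phi_lt (proper_card pr) h0.
  by move=> e; move: h1; rewrite e eqxx.
Qed.

Lemma kind_x0_K1 (x : T) : psi t != 0 -> p x != 0 -> phi x t != 1 -> False.
Proof.
move=> hp px h1; have Px := psupp px.
have : (0 < #|x.1|)%N by rewrite card_gt0; exact: infl_ne Px.
by move=> c; move: h1; rewrite (phi_psi hp c) eqxx.
Qed.

Lemma kind_comp (y1 y2 : T) : kind t p y1 -> kind t p y2 -> comp y1 y2.
Proof.
have Kx0g : forall x : T, p x != 0 -> comp x0 (g x).
  move=> x px; apply: comp_le; apply: x0_below; [exact: P_g (psupp px) | exact: v_g].
case=> [[hp1 ->]|[hp1 [x [px [[h1 ->]|[h0 ->]]]]]];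
case=> [[hp2 ->]|[hp2 [x' [px' [[h1' ->]|[h0' ->]]]]]].
- by left.
- by case: (kind_x0_K1 hp1 px' h1').
- exact: Kx0g.
- by case: (kind_x0_K1 hp2 px h1).
- exact: pchain.
- exact: comp_mixed.
- exact/comp_sym/Kx0g.
- exact/comp_sym/comp_mixed.
- case: (pchain px px') => [<-|[l|l]]; first by left.
    exact/comp_le/(g_mono hv1 (psupp px) (psupp px') l).
  exact/comp_sym/comp_le/(g_mono hv1 (psupp px') (psupp px) l).
Qed.

Lemma kind_P (y : T) : kind t p y -> P y.
Proof.
case=> [[_ ->]|[_ [x [px [[_ ->]|[_ ->]]]]]].
- exact: P_x0.
- exact: psupp.
- exact: P_g (psupp px).
Qed.
End Chain.

Lemma Hf_in (t : R) (p : X) : 0 <= t <= 1 -> A p -> A (Hf (t, p)).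
Proof.
move=> ht [p0 [ps [psupp pch]]]; split; first exact: Hf_ge0.
split; first exact: Hf_sum.
split.
  by move=> y /Hf_kind; apply: kind_P.
move=> a b /Hf_kind ka /Hf_kind kb.
exact: (kind_comp psupp pch ka kb).
Qed.

Lemma pt0_in : A pt0.
Proof.
split; first by move=> y; exact: ler0n.
split; first exact: sum_delta.
split.
  by move=> y; rewrite /pt0; case: (eqVneq x0 y) => [<- _|_]; [exact: P_x0 | rewrite eqxx].
move=> a b; rewrite /pt0.
case: (eqVneq x0 a) => [<-|]; last by rewrite eqxx.
by case: (eqVneq x0 b) => [<-|]; [left|rewrite eqxx].
Qed.

Lemma cts_phi (x : T) : continuous (fun z : R * X => phi x z.1).
Proof.
apply: cts_clamp; apply: cts_add; [apply: cts_mul; [exact: cts_cst | exact: cts_fst] | exact: cts_cst].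
Qed.

Lemma cts_psi : continuous (fun z : R * X => psi z.1).
Proof.
apply: cts_clamp; apply: cts_add; [apply: cts_mul; [exact: cts_cst | exact: cts_fst] | exact: cts_cst].
Qed.

Lemma cts_Hf : continuous Hf.
Proof.
apply: cts_ptws => y; rewrite /Hf.
apply: cts_add; apply: cts_mul.
- apply: cts_add; [exact: cts_cst | apply: cts_opp; exact: cts_psi].
- apply: cts_sum => x; apply: cts_mul; first exact: cts_coord.
  apply: cts_add; apply: cts_mul.
  + apply: cts_add; [exact: cts_cst | apply: cts_opp; exact: cts_phi].
  + exact: cts_cst.
  + exact: cts_phi.
  + exact: cts_cst.
- exact: cts_psi.
- exact: cts_cst.
Qed.

End Main.

Theorem corollary4p10 (R : realType) (V : finType) (mu : {set V} -> nat)
    (mu_pos : forall e : {set V}, #|e| = 2%N -> (0 < mu e)%N)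
    (hv : exists v : V, forall e : {set V}, #|e| = 2%N -> v \in e -> mu e = 1%N) :
  @contractible R _ (@order_complex_realization R _ (@is_infl V mu) (@infl_lt V mu)).
Proof.
case: hv => v hv1.
exists (@pt0 R V mu v); first exact: pt0_in.
exists (@Hf R V mu v); split.
- apply: continuous_subspaceT; exact: cts_Hf.
- by move=> x _; exact: Hf0.
- by move=> x _; exact: Hf1.
- by move=> t x ht Ax; exact: (Hf_in hv1 ht Ax).
Qed.
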